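(* Let $\alpha\in(0,1)$, $n\ge1$, and let $(x_{i1},x_{i2},y_i)\in\mathbb R^3$, $i=1,\dots,n$. Suppose that $$\frac1n\sum_{i=1}^n\mathrm S^{\rm Q}_{\alpha,\theta}(x_{i1},y_i)\le\frac1n\sum_{i=1}^n\mathrm S^{\rm Q}_{\alpha,\theta}(x_{i2},y_i)$$ for every $\theta\in\{x_{11},x_{12},y_1,\dots,x_{n1},x_{n2},y_n\}$. Then the same inequality holds for every $\theta\in\mathbb R$, and consequently $\frac1n\sum_{i=1}^n\mathrm S(x_{i1},y_i)\le\frac1n\sum_{i=1}^n\mathrm S(x_{i2},y_i)$ for every $\mathrm S\in\mathcal S^{\rm Q}_\alpha$ (i.e. the empirical forecast $(x_{i1})_i$ dominates $(x_{i2})_i$ for $\alpha$-quantile prediction).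
   Context: $\mathcal S^{\rm Q}_\alpha$ is the class of all scoring functions $\mathrm S(x,y)=(\mathbb 1(y<x)-\alpha)(g(x)-g(y))$ with $g:\mathbb R\to\mathbb R$ left-continuous and non-decreasing. The elementary quantile scoring function is $\mathrm S^{\rm Q}_{\alpha,\theta}(x,y)=(\mathbb 1(y<x)-\alpha)(\mathbb 1(\theta<x)-\mathbb 1(\theta<y))$, i.e. it equals $1-\alpha$ if $y\le\theta<x$, $\alpha$ if $x\le\theta<y$, and $0$ otherwise. *)

(* Defs.v *)
From Stdlib Require Import Reals Lra Lia.
Open Scope R_scope.

Definition ind_lt (a b : R) : R := if Rlt_dec a b then 1 else 0.

Definition score_g (alpha : R) (g : R -> R) (x y : R) : R :=
  (ind_lt y x - alpha) * (g x - g y).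

Definition SQ (alpha theta : R) (x y : R) : R :=
  (ind_lt y x - alpha) * (ind_lt theta x - ind_lt theta y).

Definition nondecreasing (g : R -> R) : Prop :=
  forall a b, a <= b -> g a <= g b.

Definition left_continuous (g : R -> R) : Prop :=
  forall x eps, 0 < eps ->
    exists delta, 0 < delta /\
      forall z, x - delta < z <= x -> Rabs (g z - g x) < eps.

Definition in_SQ_class (alpha : R) (S : R -> R -> R) : Prop :=
  exists g, nondecreasing g /\ left_continuous g /\
    forall x y, S x y = score_g alpha g x y.

Definition emp_mean (n : nat) (f : nat -> R) : R :=
  / INR n * sum_f_R0 f (pred n).

(* Main.v *)
Require Import Defs.
From Stdlib Require Import Reals.
From Stdlib Require Import Lra Lia List Classical.
Open Scope R_scope.

Lemma maxP (P : R -> Prop) (l : list R) :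
  (forall z, In z l -> ~ P z) \/ exists p, In p l /\ P p /\ forall z, In z l -> P z -> z <= p.
Proof.
  induction l as [|a l IH].
  - left; simpl; tauto.
  - destruct IH as [H|[p [Hp1 [Hp2 Hp3]]]].
    + destruct (classic (P a)) as [Pa|nPa].
      * right; exists a; split; [left; auto| split; auto].
        intros z [<-|Hz] Pz; [lra| exfalso; exact (H z Hz Pz)].
      * left; intros z [<-|Hz]; auto.
    + destruct (classic (P a)) as [Pa|nPa].
      * destruct (Rle_dec a p).
        -- right; exists p; split; [right;auto|split;auto].
           intros z [<-|Hz] Pz; auto.
        -- right; exists a; split; [left; auto|split; auto].
           intros z [<-|Hz] Pz; [lra| specialize (Hp3 z Hz Pz); lra].
      * right; exists p; split; [right; auto| split; auto].
        intros z [<-|Hz] Pz; [contradiction| auto].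
Qed.

Lemma filter_le (P Q : R -> bool) (l : list R) :
  (forall z, In z l -> P z = true -> Q z = true) ->
  (length (filter P l) <= length (filter Q l))%nat.
Proof.
  induction l as [|a l IH]; intros H; simpl; [lia|].
  assert (IH' : (length (filter P l) <= length (filter Q l))%nat)
    by (apply IH; intros; apply H; simpl; auto).
  destruct (P a) eqn:Pa.
  - rewrite (H a (or_introl eq_refl) Pa); simpl; lia.
  - destruct (Q a); simpl; lia.
Qed.

Lemma filter_lt (P Q : R -> bool) (l : list R) :
  (forall z, In z l -> P z = true -> Q z = true) ->
  forall w, In w l -> P w = false -> Q w = true ->
  (length (filter P l) < length (filter Q l))%nat.
Proof.
  induction l as [|a l IH]; intros H w Hw Pw Qw; simpl in Hw; [contradiction|].
  assert (H' : forall z, In z l -> P z = true -> Q z = true)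
    by (intros; apply H; simpl; auto).
  destruct Hw as [<-|Hw].
  - simpl; rewrite Pw, Qw; simpl. pose proof (filter_le P Q l H'); lia.
  - simpl. specialize (IH H' w Hw Pw Qw).
    destruct (P a) eqn:Pa.
    + rewrite (H a (or_introl eq_refl) Pa); simpl; lia.
    + destruct (Q a); simpl; lia.
Qed.

Definition ltb (t z : R) : bool := if Rlt_dec z t then true else false.

Lemma ltb_true t z : ltb t z = true <-> z < t.
Proof. unfold ltb; destruct (Rlt_dec z t); split; intros; try lra; try discriminate; auto. Qed.

Lemma ltb_false t z : ~ z < t -> ltb t z = false.
Proof. unfold ltb; destruct (Rlt_dec z t); intros; [contradiction|auto]. Qed.

Definition Pts (n : nat) (x1 x2 y : nat -> R) :=
  flat_map (fun i => x1 i :: x2 i :: y i :: nil) (seq 0 n).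

Lemma Pts_in n x1 x2 y i : (i < n)%nat ->
  In (x1 i) (Pts n x1 x2 y) /\ In (x2 i) (Pts n x1 x2 y) /\ In (y i) (Pts n x1 x2 y).
Proof.
  intros Hi; unfold Pts; repeat split; apply in_flat_map; exists i;
    (split; [apply in_seq; lia | simpl; auto]).
Qed.

Lemma Pts_inv n x1 x2 y z : In z (Pts n x1 x2 y) ->
  exists i, (i < n)%nat /\ (z = x1 i \/ z = x2 i \/ z = y i).
Proof.
  unfold Pts; intros H; apply in_flat_map in H; destruct H as [i [Hi Hz]].
  apply in_seq in Hi. exists i; split; [lia|].
  simpl in Hz; destruct Hz as [H|[H|[H|[]]]]; subst; auto.
Qed.

Definition Dg alpha n (x1 x2 y : nat -> R) (h : R -> R) :=
  sum_f_R0 (fun i => score_g alpha h (x1 i) (y i) - score_g alpha h (x2 i) (y i)) (pred n).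

Lemma D_lin alpha n x1 x2 y h h' c k : (1 <= n)%nat ->
  (forall z, In z (Pts n x1 x2 y) -> h z = h' z + c * k z) ->
  Dg alpha n x1 x2 y h = Dg alpha n x1 x2 y h' + c * Dg alpha n x1 x2 y k.
Proof.
  intros Hn Hz; unfold Dg. rewrite scal_sum, <- plus_sum.
  apply sum_eq; intros i Hi.
  destruct (Pts_in n x1 x2 y i) as [H1 [H2 H3]]; [lia|].
  unfold score_g. rewrite (Hz _ H1), (Hz _ H2), (Hz _ H3). ring.
Qed.

Lemma D_const alpha n x1 x2 y h a : (1 <= n)%nat ->
  (forall z, In z (Pts n x1 x2 y) -> h z = a) -> Dg alpha n x1 x2 y h = 0.
Proof.
  intros Hn Hz; unfold Dg.
  transitivity (sum_f_R0 (fun _ => 0) (pred n)).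
  - apply sum_eq; intros i Hi.
    destruct (Pts_in n x1 x2 y i) as [H1 [H2 H3]]; [lia|].
    unfold score_g. rewrite (Hz _ H1), (Hz _ H2), (Hz _ H3). ring.
  - rewrite sum_cte; ring.
Qed.

Lemma emp_iff n f1 f2 : (1 <= n)%nat ->
  (emp_mean n f1 <= emp_mean n f2 <-> sum_f_R0 (fun i => f1 i - f2 i) (pred n) <= 0).
Proof.
  intros Hn; unfold emp_mean; rewrite minus_sum.
  assert (0 < / INR n) by (apply Rinv_0_lt_compat; apply lt_0_INR; lia).
  split; intro H0; nra.
Qed.

Lemma ind1 t z : t < z -> ind_lt t z = 1.
Proof. unfold ind_lt; destruct (Rlt_dec t z); [auto|lra]. Qed.

Lemma ind0 t z : z <= t -> ind_lt t z = 0.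
Proof. unfold ind_lt; destruct (Rlt_dec t z); [lra|auto]. Qed.

Lemma ind_eq theta p z : (z <= theta -> z <= p) -> p <= theta -> ind_lt theta z = ind_lt p z.
Proof.
  intros H Hp; unfold ind_lt; destruct (Rlt_dec theta z), (Rlt_dec p z); try reflexivity;
    exfalso; destruct (Rle_dec z theta); try specialize (H r1); try specialize (H r0); lra.
Qed.

Theorem mainTheorem8 (alpha : R) (n : nat) (x1 x2 y : nat -> R)
  (halpha : 0 < alpha < 1) (hn : (1 <= n)%nat)
  (hdom : forall theta : R,
     (exists i : nat, (i < n)%nat /\ (theta = x1 i \/ theta = x2 i \/ theta = y i)) ->
     emp_mean n (fun i => SQ alpha theta (x1 i) (y i))
       <= emp_mean n (fun i => SQ alpha theta (x2 i) (y i))) :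
  (forall theta : R,
     emp_mean n (fun i => SQ alpha theta (x1 i) (y i))
       <= emp_mean n (fun i => SQ alpha theta (x2 i) (y i)))
  /\
  (forall S : R -> R -> R, in_SQ_class alpha S ->
     emp_mean n (fun i => S (x1 i) (y i))
       <= emp_mean n (fun i => S (x2 i) (y i))).
Proof.
  set (L := Pts n x1 x2 y).
  assert (P1 : forall theta,
     emp_mean n (fun i => SQ alpha theta (x1 i) (y i))
       <= emp_mean n (fun i => SQ alpha theta (x2 i) (y i))).
  { intro theta.
    destruct (maxP (fun z => z <= theta) L) as [H|[p [Hp [Hpt Hmax]]]].
    - apply emp_iff; auto.
      right. transitivity (sum_f_R0 (fun _ => 0) (pred n)).
      + apply sum_eq; intros i Hi.
        destruct (Pts_in n x1 x2 y i) as [H1 [H2 H3]]; [lia|].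
        unfold SQ. rewrite (ind1 theta (x1 i)), (ind1 theta (x2 i)), (ind1 theta (y i));
          [ring| | |];
          match goal with |- theta < ?z => apply Rnot_le_lt; apply H; assumption end.
      + rewrite sum_cte; ring.
    - assert (Heq : forall z, In z L -> ind_lt theta z = ind_lt p z)
        by (intros z Hz; apply ind_eq; auto).
      assert (E : forall x, (forall i, (i < n)%nat -> In (x i) L) ->
        emp_mean n (fun i => SQ alpha theta (x i) (y i)) =
        emp_mean n (fun i => SQ alpha p (x i) (y i))).
      { intros x Hx. unfold emp_mean; f_equal. apply sum_eq; intros i Hi.
        destruct (Pts_in n x1 x2 y i) as [H1 [H2 H3]]; [lia|].
        unfold SQ. rewrite (Heq _ (Hx i ltac:(lia))), (Heq _ H3). reflexivity. }
      rewrite (E x1), (E x2).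
      + apply hdom. apply Pts_inv; exact Hp.
      + intros i Hi; apply (Pts_in n x1 x2 y i Hi).
      + intros i Hi; apply (Pts_in n x1 x2 y i Hi). }
  split; [exact P1|].
  assert (P1' : forall theta, Dg alpha n x1 x2 y (ind_lt theta) <= 0).
  { intro theta. pose proof (proj1 (emp_iff n _ _ hn) (P1 theta)) as H.
    unfold Dg; exact H. }
  assert (Ind : forall k g t, nondecreasing g -> (forall z, t <= z -> g z = g t) ->
     (length (filter (ltb t) L) <= k)%nat -> Dg alpha n x1 x2 y g <= 0).
  { induction k as [|k IH]; intros g t Hnd Hc Hk;
      (destruct (maxP (fun z => z < t) L) as [H|[p [Hp [Hpt Hmax]]]];
       [ rewrite (D_const alpha n x1 x2 y g (g t)); [lra|auto|];
         intros z Hz; apply Hc; specialize (H z Hz); lra | ]);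
      (assert (Hlt : (length (filter (ltb p) L) < length (filter (ltb t) L))%nat);
       [ apply filter_lt with p; auto;
         [ intros z Hz Hpz; apply ltb_true; apply ltb_true in Hpz; lra
         | apply ltb_false; lra
         | apply ltb_true; lra ] | ]).
    - lia.
    - assert (Hgp : g p <= g t) by (apply Hnd; lra).
      rewrite (D_lin alpha n x1 x2 y g (fun z => Rmin (g z) (g p)) (g t - g p) (ind_lt p)); auto.
      + assert (D1 : Dg alpha n x1 x2 y (fun z => Rmin (g z) (g p)) <= 0).
        { apply (IH _ p).
          - intros a b Hab. specialize (Hnd a b Hab). unfold Rmin.
            destruct (Rle_dec (g a) (g p)), (Rle_dec (g b) (g p)); lra.
          - intros z Hz. assert (g p <= g z) by (apply Hnd; lra).
            rewrite (Rmin_right (g z)), Rmin_right; lra.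
          - lia. }
        specialize (P1' p). nra.
      + intros z Hz. destruct (Rle_dec z p).
        * rewrite ind0; auto. assert (g z <= g p) by (apply Hnd; lra).
          rewrite Rmin_left; lra.
        * rewrite ind1; [|lra].
          assert (t <= z).
          { destruct (Rlt_dec z t) as [Hzt|Hzt]; [specialize (Hmax z Hz Hzt); lra|lra]. }
          rewrite (Hc z H). rewrite Rmin_right; lra. }
  intros S [g [Hnd [_ HS]]].
  apply emp_iff; auto.
  assert (E : sum_f_R0 (fun i => S (x1 i) (y i) - S (x2 i) (y i)) (pred n)
              = Dg alpha n x1 x2 y g)
    by (unfold Dg; apply sum_eq; intros; rewrite !HS; reflexivity).
  rewrite E.
  destruct (maxP (fun _ => True) L) as [H|[M [HM [_ HMax]]]].
  - exfalso. apply (H (x1 0%nat)); auto. apply (Pts_in n x1 x2 y 0%nat); lia.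
  - rewrite (D_lin alpha n x1 x2 y g (fun z => Rmin (g z) (g M)) 0 g); auto.
    + assert (Dg alpha n x1 x2 y (fun z => Rmin (g z) (g M)) <= 0); [|lra].
      apply (Ind (length L) _ M).
      * intros a b Hab. specialize (Hnd a b Hab). unfold Rmin.
        destruct (Rle_dec (g a) (g M)), (Rle_dec (g b) (g M)); lra.
      * intros z Hz. assert (g M <= g z) by (apply Hnd; lra).
        rewrite (Rmin_right (g z)), Rmin_right; lra.
      * apply filter_length_le.
    + intros z Hz. assert (g z <= g M) by (apply Hnd; apply HMax; auto).
      rewrite Rmin_left; lra.
Qed.
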